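(* Let $r_n$ be the number of recursively labelled red and white trees with $n$ labels, and $F(x)=\sum_{n\ge1}r_nx^n$. Then $F=x+2xF+2F^2$. (The first values are $1,4,24,176,1440,\dots$.)
   Context: A labelled red and white tree with $n$ labels is a finite rooted tree (children unordered) in which each node $z$ carries a possibly empty label set $L(z)\subseteq[n]$, the sets $L(z)$ partitioning $[n]$, and every node with empty label set has at least two children; colours (red/white) are determined by these data (a labelled node is white, an empty node is red iff all its children are white) and do not affect counting. It is recursively labelled if for every node $z$ the union of the label sets of the nodes of the subtree rooted at $z$ is an interval of consecutive integers. *)

(* Defs.v *)
From Stdlib Require List.
From Stdlib Require Import Permutation.
From mathcomp Require Import all_boot.

Set Implicit Arguments.
Unset Strict Implicit.
Unset Printing Implicit Defensive.

(* A finite rooted tree with unordered children: a node carries its label set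
   L(z) (as a sequence of naturals) and the list of its children; the order of
   the children (and of the labels inside a node) is irrelevant, which is taken
   into account by the isomorphism relation [rw_iso] below.  Colours are
   determined by the data and do not affect counting, so they are omitted. *)
Inductive rwtree : Type :=
  RWNode : seq nat -> seq rwtree -> rwtree.

Fixpoint rw_labels (t : rwtree) : seq nat :=
  match t with
  | RWNode L ch => L ++ flatten (map rw_labels ch)
  end.

Fixpoint rw_all_nodes (P : seq nat -> seq rwtree -> bool) (t : rwtree) : bool :=
  match t with
  | RWNode L ch => P L ch && all (rw_all_nodes P) ch
  end.

Definition rw_tree_n (n : nat) (t : rwtree) : bool :=
  perm_eq (rw_labels t) (iota 1 n) &&
  rw_all_nodes (fun L ch => (L == [::]) ==> (2 <= size ch)) t.

Definition is_interval (s : seq nat) : Prop :=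
  exists a, perm_eq s (iota a (size s)).

Fixpoint rw_all_subtrees (P : rwtree -> Prop) (t : rwtree) : Prop :=
  match t with
  | RWNode L ch => P t /\ (fix aux (l : seq rwtree) : Prop :=
                             match l with
                             | [::] => True
                             | c :: l' => rw_all_subtrees P c /\ aux l'
                             end) ch
  end.

Definition recursively_labelled (t : rwtree) : Prop :=
  rw_all_subtrees (fun s => is_interval (rw_labels s)) t.

Definition rl_tree (n : nat) (t : rwtree) : Prop :=
  rw_tree_n n t /\ recursively_labelled t.

Inductive rw_iso : rwtree -> rwtree -> Prop :=
| rw_iso_node (L1 L2 : seq nat) (c1 c2 c2' : seq rwtree) :
    perm_eq L1 L2 -> Permutation c2 c2' -> List.Forall2 rw_iso c1 c2' ->
    rw_iso (RWNode L1 c1) (RWNode L2 c2).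

(* [num_rl_trees n k]: there are exactly k recursively labelled red and white
   trees with n labels (up to isomorphism), i.e. there is a list of k pairwise
   non-isomorphic such trees such that every such tree is isomorphic to one
   of them. *)
Definition num_rl_trees (n k : nat) : Prop :=
  exists s : seq rwtree,
    size s = k /\
    (forall t, List.In t s -> rl_tree n t) /\
    (forall t, rl_tree n t -> exists2 t', List.In t' s & rw_iso t t') /\
    (forall (d : rwtree) i j, i < j -> j < k -> ~ rw_iso (nth d s i) (nth d s j)).

(* Main.v *)
Require Import Defs.
From Stdlib Require List.
From Stdlib Require Import Permutation.
From HB Require Import structures.
From mathcomp Require Import all_boot zify.

Definition rwtree_ind' (P : rwtree -> Prop)
  (H : forall L ch, List.Forall P ch -> P (RWNode L ch)) : forall t, P t :=
  fix F t := match t with RWNode L ch => H L ch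
    ((fix G l := match l return List.Forall P l with
      | [::] => List.Forall_nil _
      | c :: l' => List.Forall_cons _ (F c) (G l') end) ch) end.

Fixpoint rw_enc (t : rwtree) : GenTree.tree (seq nat) :=
  match t with RWNode L ch => GenTree.Node 0 (GenTree.Leaf L :: map rw_enc ch) end.
Fixpoint rw_dec (t : GenTree.tree (seq nat)) : option rwtree :=
  match t with
  | GenTree.Node _ (GenTree.Leaf L :: ts) => Some (RWNode L (pmap rw_dec ts))
  | _ => None end.
Lemma rw_encK : pcancel rw_enc rw_dec.
Proof.
elim/rwtree_ind' => L ch IH /=; congr (Some (RWNode L _)).
elim: ch IH => [|c ch IHc] //= H; inversion H; subst.
by rewrite H2 /= IHc.
Qed.
HB.instance Definition _ := Countable.copy rwtree (pcan_type rw_encK).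

Lemma In_mem (T : eqType) (x : T) s : List.In x s -> x \in s.
Proof. elim: s => //= y s IH [->|/IH H]; rewrite inE. by rewrite eqxx. by rewrite H orbT. Qed.
Lemma mem_In (T : eqType) (x : T) s : x \in s -> List.In x s.
Proof. elim: s => //= y s IH; rewrite inE => /orP [/eqP->|/IH]; auto. Qed.

Notation P := (seq nat * seq rwtree)%type.
Definition nodeP (p : P) := RWNode p.1 p.2.
Definition single (q : P) : P := ([::], [:: nodeP q]).
Definition Wof (g : nat -> nat -> seq P) b m : seq P :=
  if m is 0 then [:: ([::], [::])] else g b m ++ map single (g b m).
Definition Fch (q : P * P) : P := (q.2.1, nodeP q.1 :: q.2.2).
Definition Tk (g : nat -> nat -> seq P) a n k : seq (P * P) :=
  [seq (q, w) | q <- g a k, w <- Wof g (a + k) (n - k)].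
Definition step (g : nat -> nat -> seq P) a n : seq P :=
  if n is n'.+1 then
    map (fun w => (a :: w.1, w.2)) (Wof g a.+1 n') ++
    map Fch (flatten (map (Tk g a n) (iota 1 n')))
  else [::].
Fixpoint genP (f : nat) : nat -> nat -> seq P :=
  if f is f'.+1 then step (genP f') else fun _ _ => [::].

Lemma step_ext g1 g2 a n : (forall b m, m < n -> g1 b m = g2 b m) ->
  step g1 a n = step g2 a n.
Proof.
case: n => [|n] //= H.
have HW : forall b m, m <= n -> Wof g1 b m = Wof g2 b m.
  by move=> b [|m] //= Hm; rewrite H.
rewrite HW //; congr (_ ++ map Fch (flatten _)).
apply/eq_in_map => k; rewrite mem_iota => /andP [k1 k2].
rewrite /Tk H ?HW //; lia.
Qed.

Lemma genP_fuel f g a n : n < f -> n < g -> genP f a n = genP g a n.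
Proof.
elim: f g a n => [|f IH] [|g] a n //= H1 H2.
apply: step_ext => b m Hm; apply: IH; lia.
Qed.

Definition G a n := genP n.+1 a n.
Lemma G_eq a n : G a n = step G a n.
Proof.
rewrite /G /=; apply: step_ext => b m Hm; change (genP n b m = genP m.+1 b m); apply: genP_fuel; lia.
Qed.
Lemma G0 a : G a 0 = [::].
Proof. by rewrite G_eq. Qed.
Arguments G : simpl never.

Lemma size_Wof b m : size (Wof G b m) = (m == 0) + 2 * size (G b m).
Proof. case: m => [|m]; first by rewrite G0. rewrite /Wof size_cat size_map; lia. Qed.

Lemma size_G a n : size (G a n.+1) =
  size (Wof G a.+1 n) + sumn (map (fun k => size (G a k) * size (Wof G (a + k) (n.+1 - k))) (iota 1 n)).
Proof.
rewrite G_eq /= size_cat size_map size_map size_flatten /shape -map_comp.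
congr (_ + sumn _); apply: eq_map => k /=; by rewrite /Tk size_allpairs.
Qed.

Lemma size_G_indep a b n : size (G a n) = size (G b n).
Proof.
elim: n {-2}n (leqnn n) a b => [|N IH] n Hn a b.
  by move: Hn; rewrite leqn0 => /eqP->; rewrite !G0.
case: n Hn => [|n] Hn; first by rewrite !G0.
rewrite !size_G !size_Wof (IH n _ a.+1 b.+1) //; congr (_ + sumn _).
apply/eq_in_map => k; rewrite mem_iota => /andP [k1 k2].
rewrite !size_Wof (IH k _ a b) ?(IH (n.+1 - k) _ (a + k) (b + k)) //; lia.
Qed.

Definition r n := size (G 1 n).

Lemma r_rec n : r n = (n == 1) + 2 * r n.-1 + 2 * \sum_(i < n.+1) r i * r (n - i).
Proof.
have r0 : r 0 = 0 by rewrite /r G0.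
case: n => [|n]; first by rewrite big_ord1 r0.
rewrite {1}/r size_G size_Wof (size_G_indep 2 1).
rewrite -/(r n) big_ord_recl r0 mul0n add0n big_ord_recr /= subnn r0 muln0 addn0.
have -> : (n.+1 == 1) = (n == 0) by [].
rewrite addnA; congr (_ + _).
rewrite sumnE big_map big_distrr /=.
have -> : iota 1 n = index_iota 1 n.+1 by rewrite /index_iota subSS subn0.
rewrite big_add1 /= big_mkord.
apply: eq_bigr => i _.
rewrite size_Wof (size_G_indep (1 + _) 1) -/(r _) -/(r _) /bump /= add1n subSS.
have -> : (n - i == 0) = false by apply/negbTE; rewrite subn_eq0 -ltnNge.
rewrite add0n; lia.
Qed.

Set Implicit Arguments. Unset Strict Implicit.

Definition labs (p : P) := p.1 ++ flatten (map rw_labels p.2).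
Definition cond (L : seq nat) (ch : seq rwtree) := (L == [::]) ==> (2 <= size ch).
Definition good t := rw_all_nodes cond t /\ recursively_labelled t.

Lemma all_Forall (T : Type) (p : pred T) l : all p l <-> List.Forall p l.
Proof.
elim: l => [|x l IH] /=; first by split.
split; first by case/andP => H1 /IH; constructor.
by move=> H; inversion H; subst; rewrite H2 /=; apply/IH.
Qed.

Lemma rl_node L ch : recursively_labelled (RWNode L ch) <->
  is_interval (rw_labels (RWNode L ch)) /\ List.Forall recursively_labelled ch.
Proof.
rewrite /recursively_labelled /=; split; case=> H1 H2; split => //.
  by elim: ch H2 {H1} => [|c ch IH] //= [H3 H4]; constructor; auto.
by elim: ch H2 {H1} => [|c ch IH] //= /List.Forall_cons_iff [H3 H4]; split; [exact: H3|exact: IH].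
Qed.

Lemma good_node L ch : good (RWNode L ch) <->
  [/\ cond L ch, List.Forall good ch & is_interval (L ++ flatten (map rw_labels ch))].
Proof.
rewrite /good rl_node /=; split.
  case=> /andP [H1 /all_Forall H2] [H3 H4]; split => //.
  elim: ch H2 H4 {H1 H3} => [|c ch IH] H2 H4; first by constructor.
  inversion H2; inversion H4; subst; constructor; auto.
case=> H1 H2 H3; split; [apply/andP; split => //|split => //].
  apply/all_Forall; elim: ch H2 {H1 H3} => [|c ch IH] H; first by constructor.
  by inversion H; subst; constructor; [case: H2|auto].
elim: ch H2 {H1 H3} => [|c ch IH] H; first by constructor.
by inversion H; subst; constructor; [case: H2|auto].
Qed.

Lemma Wof_cases g b m w : w \in Wof g b m ->
  (m = 0 /\ w = ([::],[::])) \/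
  (0 < m /\ (w \in g b m \/ exists q, q \in g b m /\ w = single q)).
Proof.
case: m => [|m] /=; first by rewrite inE => /eqP ->; left.
rewrite mem_cat => /orP [H|/mapP [q Hq ->]]; right; split => //; [left|right] => //.
by exists q.
Qed.

Lemma G_cases a n p : p \in G a n.+1 ->
  (exists w, w \in Wof G a.+1 n /\ p = (a :: w.1, w.2)) \/
  (exists k q w, [/\ 1 <= k <= n, q \in G a k, w \in Wof G (a + k) (n.+1 - k)
                   & p = Fch (q, w)]).
Proof.
rewrite G_eq /= mem_cat => /orP [/mapP [w Hw ->]|/mapP [[q w] /flattenP [s /mapP [k Hk ->] Hqw] ->]].
  by left; exists w.
right; exists k, q, w; move: Hk; rewrite mem_iota => Hk.
by move: Hqw; rewrite /Tk => /allpairsP [[q' w'] /= [H1 H2 [-> ->]]]; split => //; lia.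
Qed.

Lemma perm_flatten_Perm (l l' : seq rwtree) : Permutation l l' ->
  perm_eq (flatten (map rw_labels l)) (flatten (map rw_labels l')).
Proof.
elim => [|x u1 u2 _ IH|x y u|u1 u2 u3 _ H1 _ H2] /=.
- by [].
- by rewrite perm_cat2l.
- by rewrite perm_catCA.
- exact: perm_trans H1 H2.
Qed.

Lemma labs_single q : labs (single q) = labs q.
Proof. by rewrite /labs /= cats0. Qed.

Lemma perm_G n : forall a p, p \in G a n -> perm_eq (labs p) (iota a n).
Proof.
elim: n {-2}n (leqnn n) => [|N IH] n Hn a p.
  by move: Hn; rewrite leqn0 => /eqP->; rewrite G0.
case: n Hn => [|n] Hn; first by rewrite G0.
have HW : forall m b w, m <= N -> w \in Wof G b m -> perm_eq (labs w) (iota b m).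
  move=> m b w Hm /Wof_cases [[-> ->]|[_ [/IH -> //|[q [/IH Hq ->]]]]] //.
  by rewrite labs_single; apply: Hq.
case/G_cases => [[w [Hw ->]]|[k [q [w [Hk Hq Hw ->]]]]].
  by rewrite /labs /= -/(labs w) perm_cons; apply: HW Hw; lia.
rewrite /labs /= -/(labs q) perm_catCA -/(labs w).
have -> : a :: iota a.+1 n = iota a k ++ iota (a + k) (n.+1 - k) by rewrite -iotaD subnKC //; lia.
apply: perm_cat; first by apply: IH Hq; lia.
by apply: HW Hw; lia.
Qed.

Lemma perm_W m b w : w \in Wof G b m -> perm_eq (labs w) (iota b m).
Proof.
move/Wof_cases => [[-> ->]|[_ [/perm_G -> //|[q [/perm_G Hq ->]]]]] //.
by rewrite labs_single.
Qed.

Lemma W_ge m b w x : w \in Wof G b m -> x \in w.1 -> b <= x.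
Proof.
move=> /perm_W /perm_mem H Hx.
have : x \in labs w by rewrite mem_cat Hx.
by rewrite H mem_iota => /andP [].
Qed.

Lemma valid_G a n p : p \in G a n -> cond p.1 p.2.
Proof.
case: n => [|n]; first by rewrite G0.
case/G_cases => [[w [Hw ->]]|[k [q [w [Hk Hq Hw ->]]]]] //=.
rewrite /cond /=; apply/implyP => /eqP H1.
case: w Hw H1 => [L [|c ch]] //= Hw H1; rewrite H1 in Hw.
move: (perm_size (perm_W Hw)); rewrite size_iota /labs /=; lia.
Qed.

Lemma good_G n : forall a p, p \in G a n -> List.Forall good p.2.
Proof.
elim: n {-2}n (leqnn n) => [|N IH] n Hn a p.
  by move: Hn; rewrite leqn0 => /eqP->; rewrite G0.
case: n Hn => [|n] Hn; first by rewrite G0.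
have Hg : forall k b q, k <= N -> q \in G b k -> good (nodeP q).
  move=> k b q Hk Hq; apply/good_node; split.
  - exact: valid_G Hq.
  - exact: (IH k Hk _ _ Hq).
  - by exists b; rewrite (perm_size (perm_G Hq)) size_iota; apply: perm_G Hq.
have HW : forall m b w, m <= N -> w \in Wof G b m -> List.Forall good w.2.
  move=> m b w Hm /Wof_cases [[_ ->]|[_ [Hw|[q [Hq ->]]]]] //.
  - exact: (IH m Hm _ _ Hw).
  - by constructor; [apply: (Hg m b q Hm Hq)|constructor].
case/G_cases => [[w [Hw ->]]|[k [q [w [Hk Hq Hw ->]]]]] /=.
  by apply: HW Hw; lia.
constructor; first by apply: Hg Hq; lia.
by apply: HW Hw; lia.
Qed.

Lemma good_nodeP a n p : p \in G a n -> good (nodeP p) /\ perm_eq (rw_labels (nodeP p)) (iota a n).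
Proof.
move=> Hp; have Hperm := perm_G Hp; split => //; apply/good_node; split.
- exact: valid_G Hp.
- exact: good_G Hp.
- by exists a; rewrite (perm_size Hperm) size_iota.
Qed.

Set Implicit Arguments. Unset Strict Implicit.

Lemma nodeP_inj : injective nodeP.
Proof. by move=> [x1 y1] [x2 y2] [-> ->]. Qed.

Lemma size_nodeP a k q : q \in G a k -> size (rw_labels (nodeP q)) = k.
Proof. by move=> /perm_G /perm_size; rewrite size_iota. Qed.

Lemma uniq_W b m : uniq (G b m) -> uniq (Wof G b m).
Proof.
case: m => [|m] //= H; rewrite cat_uniq H map_inj_uniq ?H ?andbT.
  apply/hasPn => x /mapP [q Hq ->]; apply/negP => /valid_G; by rewrite /cond.
by move=> [x1 y1] [x2 y2]; rewrite /single /= => -[-> ->].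
Qed.

Lemma uniq_G n : forall a, uniq (G a n).
Proof.
elim: n {-2}n (leqnn n) => [|N IH] n Hn a.
  by move: Hn; rewrite leqn0 => /eqP->; rewrite G0.
case: n Hn => [|n] Hn; first by rewrite G0.
rewrite G_eq /= cat_uniq; apply/and3P; split.
- rewrite map_inj_uniq; first by apply: uniq_W; apply: IH; lia.
  by move=> [x1 y1] [x2 y2] /= [-> ->].
- apply/hasPn => x /mapP [[q w] /flattenP [s /mapP [k Hk ->] Hqw] ->].
  apply/negP => /mapP [w' Hw' E].
  move: Hqw; rewrite /Tk => /allpairsP [[q1 w1] /= [H1 H2 [E1 E2]]]; subst q1 w1.
  move: E; rewrite /Fch /= => -[E _].
  have : a \in w.1 by rewrite E inE eqxx.
  move/(W_ge H2); move: Hk; rewrite mem_iota; lia.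
- rewrite map_inj_uniq; last first.
    by move=> [[a1 b1] [x1 y1]] [[a2 b2] [x2 y2]]; rewrite /Fch /nodeP /= => -[-> -> -> ->].
  have -> : flatten (map (Tk G a n.+1) (iota 1 n)) =
            [seq y | k <- iota 1 n, y <- Tk G a n.+1 k].
    by congr flatten; apply: eq_map => k; rewrite map_id.
  apply: allpairs_uniq_dep; first exact: iota_uniq.
    move=> k; rewrite mem_iota => Hk; apply: allpairs_uniq.
    + by apply: IH; lia.
    + by apply: uniq_W; apply: IH; lia.
    + by move=> [x1 y1] [x2 y2] _ _ /= [-> ->].
  move=> [k1 u1] [k2 u2] /allpairsPdep [k1' [u1' [_ H1 E1]]] /allpairsPdep [k2' [u2' [_ H2 E2]]] /= E.
  case: E1 => E1 E1'; subst k1'.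
  case: E2 => E2 E2'; subst k2'.
  subst u1' u2' u2.
  move: H1 H2; rewrite /Tk => /allpairsP [[q1 w1] /= [Hq1 _ E1]] /allpairsP [[q2 w2] /= [Hq2 _ E2]].
  rewrite E1 in E2; case: E2 => E3 _; subst q2.
  have : k1 = k2 by rewrite -(size_nodeP Hq1) (size_nodeP Hq2).
  by move=> ?; subst k2.
Qed.

Set Implicit Arguments. Unset Strict Implicit.

Definition iso_pair (p q : P) :=
  perm_eq p.1 q.1 /\ exists c', Permutation q.2 c' /\ List.Forall2 rw_iso p.2 c'.

Lemma iso_nodeP p q : rw_iso (nodeP p) (nodeP q) -> iso_pair p q.
Proof. move=> H; inversion H; subst; split => //; by exists c2'. Qed.

Lemma iso_labels t1 : forall t2, rw_iso t1 t2 -> perm_eq (rw_labels t1) (rw_labels t2).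
Proof.
elim/rwtree_ind': t1 => L ch IH t2 H; inversion H; subst => /=.
apply: perm_cat => //.
apply: perm_trans (perm_flatten_Perm (Permutation_sym H3)).
elim: H5 IH {H H3} => [|x y l l' Hxy _ IHl] IH //=.
inversion IH; subst; apply: perm_cat; [exact: H1|exact: IHl].
Qed.

Lemma Forall2_size (A B : Type) (R : A -> B -> Prop) l1 l2 :
  List.Forall2 R l1 l2 -> size l1 = size l2.
Proof. by elim => //= x y l l' _ _ ->. Qed.

Lemma In_flatten c l x : List.In c l -> x \in rw_labels c ->
  x \in flatten (map rw_labels l).
Proof.
elim: l => //= d l IH [->|/IH H] Hx; rewrite mem_cat ?Hx //.
by rewrite H ?orbT.
Qed.

Lemma Perm_size (A : Type) (l l' : seq A) : Permutation l l' -> size l = size l'.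
Proof. by elim => //= [x u v _ -> | u v w _ -> _ ->]. Qed.

Lemma perm_eq_nil (s : seq nat) : perm_eq s [::] -> s = [::].
Proof. by move/perm_size; case: s. Qed.

Lemma iso_G n : forall a p p', p \in G a n -> p' \in G a n -> iso_pair p p' -> p = p'.
Proof.
elim: n {-2}n (leqnn n) => [|N IH] n Hn a p p'.
  by move: Hn; rewrite leqn0 => /eqP->; rewrite G0.
case: n Hn => [|n] Hn; first by rewrite G0.
have HW : forall m b w w', m <= N -> w \in Wof G b m -> w' \in Wof G b m ->
    iso_pair w w' -> w = w'.
  move=> m b w w' Hm Hw Hw'.
  case/Wof_cases: Hw => [[Em ->]|[Hm0 [Hw|[q [Hq ->]]]]];
  case/Wof_cases: Hw' => [[Em' ->]|[Hm0' [Hw'|[q' [Hq' ->]]]]] //; try (exfalso; lia); move=> Hiso.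
  - exact: (IH m Hm b).
  - exfalso; case: Hiso => E0 [c' [Hp Hf]]; have E := perm_eq_nil E0.
    move: (valid_G Hw); rewrite /cond E /= (Forall2_size Hf) -(Perm_size Hp).
    by [].
  - exfalso; case: Hiso => /= E [c' [Hp Hf]].
    have E' : w'.1 = [::] by apply: perm_eq_nil; rewrite (perm_sym w'.1); exact: E.
    move: (valid_G Hw'); rewrite /cond E' /= (Perm_size Hp) -(Forall2_size Hf).
    by [].
  - move: Hiso; rewrite /iso_pair /single /= => -[_ [c' [Hp Hf]]]; have Ec := Permutation_length_1_inv Hp; subst c'.
    inversion Hf; subst.
    by rewrite (IH m Hm b q q' Hq Hq' (iso_nodeP H2)).
move=> Hp Hp' Hiso.
case/G_cases: Hp => [[w [Hw Ep]]|[k [q [w [Hk Hq Hw Ep]]]]];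
case/G_cases: Hp' => [[w' [Hw' Ep']]|[k' [q' [w' [Hk' Hq' Hw' Ep']]]]]; subst p p'.
- case: Hiso => /= E Hc.
  rewrite (HW n a.+1 w w') //.
  by split => //; rewrite -(perm_cons a).
- exfalso; case: Hiso => /= E _.
  have : a \in w'.1 by rewrite -(perm_mem E) inE eqxx.
  move/(W_ge Hw'); lia.
- exfalso; case: Hiso => /= E _.
  have : a \in w.1 by rewrite (perm_mem E) inE eqxx.
  move/(W_ge Hw); lia.
- case: Hiso => /= E [c' [Hp Hf]].
  inversion Hf as [|x d0 y d' Hx Hy E1 E2]; subst.
  have Ha : a \in rw_labels d0.
    rewrite -(perm_mem (iso_labels Hx)) (perm_mem (perm_G Hq)) mem_iota; lia.
  have Hin := Permutation_in _ (Permutation_sym Hp) (or_introl erefl).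
  case: Hin => [Ed|Hin].
  + subst d0.
    move: (Permutation_cons_inv Hp) => Hp2.
    have Hk2 : k = k'.
      by rewrite -(size_nodeP Hq) -(size_nodeP Hq') (perm_size (iso_labels Hx)).
    subst k'.
    have Eq : q = q' by apply: (IH k _ a) => //; [lia|exact: iso_nodeP].
    subst q'.
    have Ew : w = w'.
      apply: (HW (n.+1 - k) (a + k)) => //; first lia.
      by split => //; exists d'.
    by subst w'.
  + exfalso.
    have : a \in labs w'.
      by rewrite /labs mem_cat (In_flatten Hin Ha) orbT.
    rewrite (perm_mem (perm_W Hw')) mem_iota; lia.
Qed.

Set Implicit Arguments. Unset Strict Implicit.

Fixpoint tsize t := match t with RWNode L ch => (size L + sumn (map tsize ch)).+1 end.

Lemma Perm_sumn (l l' : seq rwtree) : Permutation l l' ->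
  sumn (map tsize l) = sumn (map tsize l').
Proof. elim => //= [x u v _ -> | x y u | u v w _ -> _ ->] //; lia. Qed.

Lemma good_ne t : good t -> 0 < size (rw_labels t).
Proof.
elim/rwtree_ind': t => L ch IH /good_node [Hc Hg _] /=.
case: L Hc => [|x L] Hc //=.
case: ch Hc IH Hg => [|c ch] //= _ IH Hg.
inversion IH; inversion Hg; subst.
rewrite size_cat; move: (H1 H5); lia.
Qed.

Lemma good_int t : good t -> is_interval (rw_labels t).
Proof. by case: t => L ch /good_node []. Qed.

Lemma split_flatten x (ch : seq rwtree) : x \in flatten (map rw_labels ch) ->
  exists c ch1 ch2, ch = ch1 ++ c :: ch2 /\ x \in rw_labels c.
Proof.
elim: ch => //= c ch IH; rewrite mem_cat => /orP [H|/IH [d [ch1 [ch2 [-> H]]]]].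
  by exists c, [::], ch.
by exists d, (c :: ch1), ch2.
Qed.

Lemma word_cover N : forall (L : seq nat) (ch : seq rwtree) a m,
  size L + sumn (map tsize ch) < N ->
  perm_eq (L ++ flatten (map rw_labels ch)) (iota a m) -> List.Forall good ch ->
  exists w, w \in Wof G a m /\ iso_pair (L, ch) w.
Proof.
elim: N => [|N IH] L ch a m HN Hperm Hg; first by [].
case: m Hperm => [|m] Hperm.
  exists ([::], [::]); split; first by rewrite inE.
  have E := perm_eq_nil Hperm.
  case: L ch E Hg {HN Hperm} => [|x L] [|c ch] //= E Hg.
    by split => //; exists [::].
  exfalso; inversion Hg; subst; move: (good_ne H1) (f_equal size E).
  rewrite size_cat /=; lia.
have Ha : a \in L ++ flatten (map rw_labels ch) by rewrite (perm_mem Hperm) mem_iota; lia.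
move: Ha; rewrite mem_cat; case: (boolP (a \in L)) => HaL /= Ha.
  have HL := perm_to_rem HaL.
  have [w [Hw [Hw1 Hw2]]] : exists w, w \in Wof G a.+1 m /\ iso_pair (rem a L, ch) w.
    apply: IH => //.
      move: HN; rewrite size_rem //; case: L HaL {HL Hperm} => //= ? ? _; lia.
    rewrite -(perm_cons a); apply: perm_trans Hperm.
    by rewrite -cat_cons perm_cat2r perm_sym.
  exists (a :: w.1, w.2); split.
    by rewrite /Wof mem_cat G_eq /= mem_cat map_f.
  split => //=; apply: perm_trans HL _; by rewrite perm_cons.
have [c [ch1 [ch2 [Ech Hc]]]] := split_flatten Ha.
set ch0 := ch1 ++ ch2.
have Hpc : Permutation ch (c :: ch0) by rewrite Ech; apply: Permutation_sym; apply: Permutation_middle.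
have Hgc : good c.
  by move: Hg => /List.Forall_forall; apply; rewrite Ech; apply: List.in_elt.
have Hg0 : List.Forall good ch0.
  by apply/List.Forall_forall => x Hx; move: Hg => /List.Forall_forall; apply; rewrite Ech;
     apply: List.in_or_app; case: (List.in_app_or _ _ _ Hx); auto; right; right.
have Hfl := perm_flatten_Perm Hpc.
have Hperm2 : perm_eq (rw_labels c ++ (L ++ flatten (map rw_labels ch0))) (iota a m.+1).
  apply: perm_trans Hperm; rewrite perm_catCA perm_cat2l perm_sym; exact: Hfl.
have [k Ek] : exists k, size (rw_labels c) = k by eexists.
have Hk : k <= m.+1 by move: (perm_size Hperm2); rewrite size_cat size_iota Ek; lia.
have Hk0 : 0 < k by rewrite -Ek; apply: good_ne.
have Hlc : perm_eq (rw_labels c) (iota a k).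
  have [b Hb] := good_int Hgc; rewrite Ek in Hb.
  have Hab : b <= a by move: Hc; rewrite (perm_mem Hb) mem_iota => /andP [].
  have Hba : a <= b.
    have : b \in rw_labels c by rewrite (perm_mem Hb) mem_iota leqnn /=; lia.
    move=> Hbc; have : b \in iota a m.+1 by rewrite -(perm_mem Hperm2) mem_cat Hbc.
    by rewrite mem_iota => /andP [].
  have -> : a = b by lia.
  exact: Hb.
have Hrest : perm_eq (L ++ flatten (map rw_labels ch0)) (iota (a + k) (m.+1 - k)).
  rewrite -(perm_cat2l (iota a k)) -iotaD subnKC //.
  apply: perm_trans Hperm2; rewrite perm_cat2r perm_sym; exact: Hlc.
have Hs := Perm_sumn Hpc.
destruct c as [Lc chc].
have HNc : size Lc + sumn (map tsize chc) < N by move: HN; rewrite Hs /=; lia.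
have HN0 : size L + sumn (map tsize ch0) < N by move: HN; rewrite Hs /=; lia.
have [Hcc Hgcc _] := proj1 (good_node _ _) Hgc.
have [wc [Hwc Hisoc]] := IH Lc chc a k HNc Hlc Hgcc.
have [q [Hq Hiso]] : exists q, q \in G a k /\ rw_iso (RWNode Lc chc) (nodeP q).
  case/Wof_cases: Hwc => [[E _]|[_ [Hwc|[q' [Hq' E]]]]].
  - by exfalso; lia.
  - exists wc; split => //; case: Hisoc => H1 [c' [H2 H3]].
    exact: rw_iso_node H1 H2 H3.
  - exfalso; subst wc; case: Hisoc => /= H1 [c' [H2 H3]].
    move: Hcc; rewrite /cond (perm_eq_nil H1) /= (Forall2_size H3) -(Perm_size H2).
    by [].
have [w0 [Hw0 [Hw01 [d0 [Hpd Hfd]]]]] := IH L ch0 (a + k) (m.+1 - k) HN0 Hrest Hg0.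
exists (w0.1, nodeP q :: w0.2); split.
  case: (ltnP k m.+1) => Hkm.
  - rewrite /Wof mem_cat; apply/orP; left; rewrite G_eq /= mem_cat; apply/orP; right.
    have Hin : (q, w0) \in flatten (map (Tk G a m.+1) (iota 1 m)).
      apply/flattenP; exists (Tk G a m.+1 k).
        by apply: map_f; rewrite mem_iota Hk0 add1n Hkm.
      exact: allpairs_f.
    exact: (map_f Fch Hin).
  - have Ek' : m.+1 - k = 0 by move: Hkm Hk; clear; lia.
    move: Hw0; rewrite Ek' /= inE => /eqP -> /=.
    rewrite /Wof mem_cat; apply/orP; right; apply/mapP; exists q => //.
    by have <- : k = m.+1 by move: Hkm Hk; clear; lia.
split => //=.
have Hf2 : List.Forall2 rw_iso (RWNode Lc chc :: ch0) (nodeP q :: d0) by constructor.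
have [d' [Hd1 Hd2]] := Permutation_Forall2 (Permutation_sym Hpc) Hf2.
exists d'; split => //.
exact: Permutation_trans (perm_skip _ Hpd) Hd1.
Qed.

Lemma tree_cover t a k : good t -> perm_eq (rw_labels t) (iota a k) ->
  exists q, q \in G a k /\ rw_iso t (nodeP q).
Proof.
case: t => Lc chc Hgc Hlc.
have [Hcc Hgcc _] := proj1 (good_node _ _) Hgc.
have Hk0 : 0 < k.
  by move: (good_ne Hgc); rewrite (perm_size Hlc) size_iota.
have [wc [Hwc Hisoc]] := word_cover (N := (size Lc + sumn (map tsize chc)).+1) (leqnn _) Hlc Hgcc.
case/Wof_cases: Hwc => [[E _]|[_ [Hwc|[q' [Hq' E]]]]].
- by exfalso; lia.
- exists wc; split => //; case: Hisoc => H1 [c' [H2 H3]].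
  exact: rw_iso_node H1 H2 H3.
- exfalso; subst wc; case: Hisoc => /= H1 [c' [H2 H3]].
  move: Hcc; rewrite /cond (perm_eq_nil H1) /= (Forall2_size H3) -(Perm_size H2).
  by [].
Qed.

Unset Implicit Arguments.
Theorem mainTheorem7 :
  exists r : nat -> nat,
    r 0 = 0 /\
    (forall n, 1 <= n -> num_rl_trees n (r n)) /\
    (forall n, r n = (n == 1) + 2 * r n.-1 + 2 * \sum_(i < n.+1) r i * r (n - i)).
Proof.
exists r; split; first by rewrite /r G0.
split; last exact: r_rec.
move=> n Hn; exists (map nodeP (G 1 n)); split; first by rewrite size_map.
split.
  move=> t /List.in_map_iff [p [<- /In_mem Hp]].
  have [[H1 H2] H3] := good_nodeP Hp.
  by split => //; rewrite /rw_tree_n H3.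
split.
  move=> t [Ht Hrl]; move: Ht; rewrite /rw_tree_n => /andP [Hperm Hnodes].
  have [q [Hq Hiso]] := tree_cover (t := t) (a := 1) (k := n) (conj Hnodes Hrl) Hperm.
  exists (nodeP q) => //; apply: List.in_map; exact: mem_In.
move=> d i j Hij Hj.
have Hi : i < size (G 1 n) by rewrite -/(r n); apply: ltn_trans Hij Hj.
have Hj' : j < size (G 1 n) by [].
set p0 := ([::], [::]) : P.
rewrite (nth_map p0) // (nth_map p0) // => /iso_nodeP Hiso.
have := iso_G (mem_nth p0 Hi) (mem_nth p0 Hj') Hiso.
move/eqP; rewrite nth_uniq // ?uniq_G // => /eqP E.
by move: Hij; rewrite E ltnn.
Qed.
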